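(* If $G$ and $H$ are finite simple graphs without isolated vertices that are both efficient open domination graphs, then $\gamma_{tR}(G\times H)\le 2\rho_o(G)\rho_o(H)$.
   Context: An open packing of $G$ is a set $D$ of vertices with $N(u)\cap N(v)=\emptyset$ for all distinct $u,v\in D$ (open neighborhoods); $\rho_o(G)$ is the maximum size of an open packing. A set $D$ is total dominating if every vertex of $G$ has a neighbor in $D$. $G$ is an efficient open domination graph if it has a total dominating set that is also an open packing. A total Roman dominating function on $G$ is a map $f:V(G)\to\{0,1,2\}$ such that every vertex with label 0 has a neighbor with label 2 and the subgraph induced by vertices with positive labels has no isolated vertices; $\gamma_{tR}(G)$ is the minimum of $\sum_v f(v)$ over such $f$. The direct product $G\times H$ has vertex set $V(G)\times V(H)$, with $(g,h)(g',h')$ an edge iff $gg'\in E(G)$ and $hh'\in E(H)$. *)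

(* Defs.v *)
(* A finite simple graph is a symmetric irreflexive
   relation e : rel T on a finType T (vertex set = all of T). *)
From mathcomp Require Import all_boot.
Set Implicit Arguments. Unset Strict Implicit. Unset Printing Implicit Defensive.

Section Graphs.
Variable T : finType.
Implicit Types (e : rel T) (D : {set T}).

Definition simple_graph e := symmetric e /\ irreflexive e.

Definition no_isolated e := forall v : T, exists u : T, e v u.

Definition oneigh e (v : T) : {set T} := [set u | e v u].

Definition open_packing e D : bool :=
  [forall u in D, forall v in D, (u != v) ==> [disjoint oneigh e u & oneigh e v]].

Definition rho_o e : nat := \max_(D : {set T} | open_packing e D) #|D|.

Definition total_dominating e D : bool :=
  [forall v, exists u in D, e v u].

Definition efficient_open_domination e : Prop :=
  exists D : {set T}, total_dominating e D && open_packing e D.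

Definition is_TRDF e (f : {ffun T -> 'I_3}) : bool :=
  [forall v, (val (f v) == 0) ==> [exists u, e v u && (val (f u) == 2)]] &&
  [forall v, (0 < val (f v)) ==> [exists u, e v u && (0 < val (f u))]].

Definition weight (f : {ffun T -> 'I_3}) : nat := \sum_(v : T) val (f v).

(* The default 2*|V| is the weight
   of the constant-2 function, which is a TRDF whenever G has no isolated
   vertices, so the default never affects the value in that case. *)
Definition gamma_tR e : nat :=
  \big[minn/(2 * #|T|)]_(f : {ffun T -> 'I_3} | is_TRDF e f) weight f.

End Graphs.

Definition direct_prod (T1 T2 : finType) (e1 : rel T1) (e2 : rel T2)
  : rel (T1 * T2)%type :=
  fun p q => e1 p.1 q.1 && e2 p.2 q.2.

(* Main.v *)
Require Import Defs.
From mathcomp Require Import all_boot.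

Lemma bigmin_le (I : finType) (P : pred I) (F : I -> nat) x j :
  P j -> \big[minn/x]_(i | P i) F i <= F j.
Proof.
move=> Pj; rewrite -big_filter.
have : j \in filter P (index_enum I) by rewrite mem_filter Pj mem_index_enum.
elim: (filter P _) => [//|a s IH]; rewrite inE big_cons => /orP [/eqP ->|js].
  exact: geq_minl.
exact: leq_trans (geq_minr _ _) (IH js).
Qed.

Theorem corollary2p5 (T1 T2 : finType) (e1 : rel T1) (e2 : rel T2) :
  simple_graph e1 -> simple_graph e2 ->
  no_isolated e1 -> no_isolated e2 ->
  efficient_open_domination e1 -> efficient_open_domination e2 ->
  gamma_tR (direct_prod e1 e2) <= 2 * rho_o e1 * rho_o e2.
Proof.
move=> _ _ _ _ [D1 /andP [tD1 pD1]] [D2 /andP [tD2 pD2]].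
pose f : {ffun (T1 * T2)%type -> 'I_3} :=
  [ffun v => if v \in setX D1 D2 then (inord 2 : 'I_3) else ord0].
have v2 : val (inord 2 : 'I_3) = 2 by exact: (@inordK 2 2 isT).
have nb : forall v : (T1 * T2)%type,
    exists u, direct_prod e1 e2 v u && (val (f u) == 2).
  move=> [g h].
  have /existsP [g' /andP [g'D eg]] := forallP tD1 g.
  have /existsP [h' /andP [h'D eh]] := forallP tD2 h.
  exists (g', h'); rewrite /direct_prod /= eg eh ffunE.
  by rewrite in_setX g'D h'D v2.
have Hf : is_TRDF (direct_prod e1 e2) f.
  apply/andP; split; apply/forallP => v; apply/implyP => _;
  have [u /andP [Hu Hu2]] := nb v; apply/existsP; exists u;
  by rewrite Hu (eqP Hu2).
have Hw : weight f = 2 * (#|D1| * #|D2|).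
  rewrite /weight -cardsX.
  rewrite (eq_bigr (fun v => 2 * (v \in setX D1 D2))); last first.
    by move=> v _; rewrite ffunE; case: (v \in _) => //.
  rewrite -big_distrr /=; congr (_ * _).
  rewrite -sum1_card [RHS]big_mkcond /=.
  by apply: eq_bigr => i _; case: (i \in _).
apply: (@leq_trans (weight f)).
  exact: bigmin_le.
rewrite Hw -mulnA leq_mul2l /=.
apply: leq_mul; rewrite /rho_o; [exact: (leq_bigmax_cond (P := open_packing e1) (F := fun D => #|D|)) | exact: (leq_bigmax_cond (P := open_packing e2) (F := fun D => #|D|))].
Qed.
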